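(* Let $\Gamma$ be a skew-symmetric graph which has the Kahan-Poisson property. Then every induced subgraph $\Gamma'$ of $\Gamma$ (on a non-empty vertex subset) has the Kahan-Poisson property.
   Context: $\mathbb F\in\{\mathbb R,\mathbb C\}$. A skew-symmetric graph is $\Gamma=(S,A)$, $S=\{1,\dots,n\}$, $A=(a_{i,j})$ skew-symmetric over $\mathbb F$; the induced subgraph on $S'\subset S$ is $(S',A|_{S'\times S'})$. Its Poisson bracket on $\mathbb F(x)$ is $\{x_i,x_j\}=a_{i,j}x_ix_j$; its Kahan morphism is $K(x_i)=\tilde x_i$ with $\tilde x_i$ the unique solution of $\tilde x_i-x_i=\tilde x_i\sum_ja_{i,j}x_j+x_i\sum_ja_{i,j}\tilde x_j$; $\Gamma$ has the Kahan-Poisson property if $\{\tilde x_i,\tilde x_j\}=a_{i,j}\tilde x_i\tilde x_j$ for all $i,j$. *)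

(* Defs.v *)
From HB Require Import structures.
From mathcomp Require Import all_boot all_algebra.
From mathcomp Require Import mpoly fraction.
From mathcomp Require Import Rstruct complex.

Set Implicit Arguments.
Unset Strict Implicit.
Unset Printing Implicit Defensive.
Import GRing.Theory.
Local Open Scope ring_scope.

(* The base field F in {R, C}: FF true = R (Stdlib reals), FF false = C = R[i]. *)
Definition FF (b : bool) : fieldType :=
  if b then (Rdefinitions.R : fieldType) else (complex Rdefinitions.R : fieldType).

Section Kahan.
Variable F : fieldType.
Variable n : nat.

Definition ratfun := {fraction {mpoly F[n]}}.

Definition xvar (i : 'I_n) : ratfun := tofrac ('X_i : {mpoly F[n]}).

(* Partial derivative d/dx_i on F(x), computed on a representative p/q:
   d(p/q) = (p_i q - p q_i) / q^2 (independent of the chosen representative). *)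
Definition rderiv (i : 'I_n) (f : ratfun) : ratfun :=
  let r := repr f in
  let p := \n_r in let q := \d_r in
  tofrac (mderiv i p * q - p * mderiv i q) / tofrac (q ^+ 2).

(* The log-canonical Poisson bracket {x_i,x_j} = a_ij x_i x_j, extended to F(x)
   as a biderivation: {f,g} = sum_{i,j} a_ij x_i x_j (d_i f)(d_j g). *)
Definition pbracket (A : 'M[F]_n) (f g : ratfun) : ratfun :=
  \sum_(i < n) \sum_(j < n)
     tofrac ((A i j)%:MP) * xvar i * xvar j * rderiv i f * rderiv j g.

(* The linear system for the Kahan map:
   xt_i - x_i = xt_i * sum_j a_ij x_j + x_i * sum_j a_ij xt_j,
   i.e. M xt = x with M_ik = delta_ik (1 - sum_j a_ij x_j) - x_i a_ik. *)
Definition kahan_matrix (A : 'M[F]_n) : 'M[ratfun]_n :=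
  \matrix_(i, k) ((i == k)%:R * (1 - \sum_(j < n) tofrac ((A i j)%:MP) * xvar j)
                  - xvar i * tofrac ((A i k)%:MP)).

Definition xvec : 'cV[ratfun]_n := \col_i xvar i.

Definition kahan (A : 'M[F]_n) : 'cV[ratfun]_n := invmx (kahan_matrix A) *m xvec.

Definition skew_symmetric (A : 'M[F]_n) : Prop := A^T = - A.

Definition kahan_poisson (A : 'M[F]_n) : Prop :=
  forall i j : 'I_n,
    pbracket A (kahan A i 0) (kahan A j 0)
    = tofrac ((A i j)%:MP) * kahan A i 0 * kahan A j 0.

End Kahan.

(* Induced subgraph on S' : vertices of S' relabelled 1..#|S'| in increasing order. *)
Definition induced (F : fieldType) (n : nat) (A : 'M[F]_n) (S' : {set 'I_n})
  : 'M[F]_#|S'| :=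
  \matrix_(i, j) A (enum_val i) (enum_val j).

(* Main.v *)
Require Import Defs.
From HB Require Import structures.
From mathcomp Require Import all_boot all_algebra.
From mathcomp Require Import mpoly fraction.
From mathcomp Require Import ring.
Set Implicit Arguments.
Unset Strict Implicit.
Unset Printing Implicit Defensive.
Import GRing.Theory.
Local Open Scope ring_scope.
Local Open Scope quotient_scope.

Lemma pi_frac (R : idomainType) (x : {ratio R}) :
  \pi_{fraction R} x = tofrac \n_x / tofrac \d_x.
Proof.
have d0 : tofrac \d_x != 0 :> {fraction R}.
  by rewrite tofrac_eq0; apply: denom_ratioP.
apply: (mulIf d0); rewrite mulfVK //.
unlock tofrac. rewrite -[LHS]/(FracField.mul _ _) -FracField.pi_mul.
apply/eqmodP; rewrite /= FracField.equivfE /FracField.mulf /=.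
have dx := denom_ratioP x.
by rewrite !numden_Ratio ?oner_neq0 ?mulf_neq0 ?oner_neq0 //= !mulr1 mulrC.
Qed.

Lemma frac_repr (R : idomainType) (f : {fraction R}) :
  f = tofrac \n_(repr f) / tofrac \d_(repr f).
Proof. by rewrite -pi_frac reprK. Qed.

Section G.
Variable F : fieldType.

Lemma mderivXU n (i j : 'I_n) : mderiv i ('X_j : {mpoly F[n]}) = (i == j)%:R.
Proof.
rewrite mderivX mnm1E eq_sym; case: eqP => [->|_] /=.
  have -> : (U_(j) - U_(j) = 0)%MM by apply/mnmP=> k; rewrite !mnmE subnn.
  by rewrite mpolyX0 scale1r.
by rewrite scale0r.
Qed.

End G.
Section H.
Variable F : fieldType.
Lemma rderiv_frac n (i : 'I_n) (p q : {mpoly F[n]}) : q != 0 ->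
  rderiv i (tofrac p / tofrac q) =
  tofrac (p^`M(i) * q - p * q^`M(i)) / tofrac (q ^+ 2).
Proof.
move=> q0; rewrite /rderiv.
have e := frac_repr (tofrac p / tofrac q : ratfun F n).
move: e; set r := repr _; set a := \n_r; set c := \d_r => e.
have c0 : c != 0 := denom_ratioP r.
have tq0 : tofrac q != 0 :> ratfun F n by rewrite tofrac_eq0.
have tc0 : tofrac c != 0 :> ratfun F n by rewrite tofrac_eq0.
have E1 : a * q = p * c.
  apply/eqP. rewrite -tofrac_eq. rewrite !rmorphM /=.
  have := congr1 (fun z => z * tofrac q * tofrac c) e.
  move=> /= h; apply/eqP.
  rewrite -[tofrac a](divfK tc0) mulrAC -h.
  by rewrite (divfK tq0).
have E2 : a^`M(i) * q + a * q^`M(i) = p^`M(i) * c + p * c^`M(i).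
  by rewrite -!mderivM E1.
have key : (a^`M(i) * c - a * c^`M(i)) * q ^+ 2 = (p^`M(i) * q - p * q^`M(i)) * c ^+ 2.
  apply/eqP; rewrite -subr_eq0; apply/eqP.
  transitivity (c * q * ((a^`M(i) * q + a * q^`M(i)) - (p^`M(i) * c + p * c^`M(i)))
     - (c^`M(i) * q + c * q^`M(i)) * (a * q - p * c)); first by ring.
  by rewrite E1 E2 !subrr !mulr0 subrr.
have tq2 : tofrac (q ^+ 2) != 0 :> ratfun F n by rewrite tofrac_eq0 expf_neq0.
have tc2 : tofrac (c ^+ 2) != 0 :> ratfun F n by rewrite tofrac_eq0 expf_neq0.
apply/eqP. rewrite eqr_div; [|exact: tc2|exact: tq2].
by rewrite -!rmorphM key.
Qed.
End H.
Section I.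
Variable F : fieldType.

Definition Br n (A : 'M[F]_n) (p1 p2 q : {mpoly F[n]}) : {mpoly F[n]} :=
 \sum_(k < n) \sum_(l < n) (A k l)%:MP * 'X_k * 'X_l *
     (p1^`M(k) * q - p1 * q^`M(k)) * (p2^`M(l) * q - p2 * q^`M(l)).

Lemma aux1 (K : fieldType) (a x y u v q : K) : q != 0 ->
  a * x * y * (u / q ^+ 2) * (v / q ^+ 2) = a * x * y * u * v / q ^+ 4.
Proof. by move=> q0; field. Qed.

Lemma aux2 (K : fieldType) (a x y b d : K) : d != 0 ->
  b / d ^+ 4 = a * (x / d) * (y / d) -> b = a * x * y * d ^+ 2.
Proof.
move=> d0 /(congr1 (fun z => z * d ^+ 4)); rewrite divfK ?expf_neq0 // => ->.
by field.
Qed.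

Lemma aux3 (K : fieldType) (a x y d : K) : d != 0 ->
  a * x * y * d ^+ 2 / d ^+ 4 = a * (x / d) * (y / d).
Proof. by move=> d0; field. Qed.

Lemma pbracket_frac n (A : 'M[F]_n) (p1 p2 q : {mpoly F[n]}) : q != 0 ->
  pbracket A (tofrac p1 / tofrac q) (tofrac p2 / tofrac q) =
  tofrac (Br A p1 p2 q) / tofrac (q ^+ 4).
Proof.
move=> q0; have tq : tofrac q != 0 :> ratfun F n by rewrite tofrac_eq0.
rewrite /pbracket /Br rmorph_sum mulr_suml; apply: eq_bigr => k _.
rewrite rmorph_sum mulr_suml; apply: eq_bigr => l _.
rewrite !rderiv_frac // /xvar !rmorphXn !rmorphM /=.
exact: aux1.
Qed.

End I.
Section J.
Variable F : fieldType.
Variable n : nat.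
Variable A : 'M[F]_n.

Definition Mp : 'M[{mpoly F[n]}]_n :=
  \matrix_(i, k) ((i == k)%:R * (1 - \sum_(j < n) (A i j)%:MP * 'X_j)
                  - 'X_i * (A i k)%:MP).
Definition xp : 'cV[{mpoly F[n]}]_n := \col_i 'X_i.

Lemma kahan_matrixE : kahan_matrix A = map_mx (@tofrac _) Mp.
Proof.
apply/matrixP => i k; rewrite !mxE rmorphB rmorphM rmorph_nat rmorphB rmorph1.
rewrite rmorph_sum /xvar rmorphM; congr (_ * (_ - _) - _).
by apply: eq_bigr => j _; rewrite rmorphM.
Qed.

Lemma xvecE : @xvec F n = map_mx (@tofrac _) xp.
Proof. by apply/matrixP => i k; rewrite !mxE. Qed.

Local Notation ev0 := (meval (fun _ : 'I_n => (0 : F))).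

Lemma ev0X i : ev0 'X_i = 0.
Proof. by rewrite mevalXU. Qed.

Lemma ev0_det : ev0 (\det Mp) = 1.
Proof.
rewrite -det_map_mx.
have -> : map_mx ev0 Mp = 1%:M.
  apply/matrixP => i k; rewrite !mxE rmorphB rmorphM rmorph_nat rmorphB rmorph1.
  rewrite rmorph_sum big1 => [|j _]; last by rewrite rmorphM /= ev0X mulr0.
  by rewrite rmorphM /= ev0X mul0r !subr0 mulr1.
by rewrite det1.
Qed.

Lemma detMp_neq0 : \det Mp != 0.
Proof.
apply/negP => /eqP h; have := ev0_det; rewrite h rmorph0 => /eqP.
by rewrite eq_sym oner_eq0.
Qed.

Lemma Mp_unit : map_mx (@tofrac _) Mp \in unitmx.
Proof. by rewrite unitmxE det_map_mx unitfE tofrac_eq0 detMp_neq0. Qed.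

Lemma kahanE i : kahan A i 0 =
  tofrac ((\adj Mp *m xp) i 0) / tofrac (\det Mp).
Proof.
rewrite /kahan kahan_matrixE xvecE /invmx Mp_unit det_map_mx -map_mx_adj.
by rewrite -scalemxAl -map_mxM !mxE mulrC.
Qed.
End J.
Section K.
Variable F : fieldType.
Variable n : nat.
Variable S' : {set 'I_n}.
Local Notation m := #|S'|.

Definition sig (i : 'I_#|S'|) : 'I_n := enum_val i.

Lemma sig_inj : injective sig.
Proof. exact: enum_val_inj. Qed.

Lemma sigS i : sig i \in S'.
Proof. exact: enum_valP. Qed.

Lemma reidx (V : nmodType) (G : 'I_n -> V) :
  (forall k, k \notin S' -> G k = 0) -> \sum_(k < n) G k = \sum_(k' < m) G (sig k').
Proof.
move=> G0; rewrite (bigID (mem S')) /= [X in _ + X]big1 ?addr0; last first.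
  by move=> k /G0.
by rewrite (big_enum_val G).
Qed.

Definition tt (k : 'I_n) : {mpoly F[m]} := \sum_(k' < m) (sig k' == k)%:R * 'X_k'.

Lemma tt_sig k' : tt (sig k') = 'X_k'.
Proof.
rewrite /tt (bigD1 k') //= eqxx mul1r big1 ?addr0 // => j ne.
by rewrite (inj_eq sig_inj) (negbTE ne) mul0r.
Qed.

Lemma tt_out k : k \notin S' -> tt k = 0.
Proof.
move=> kS; rewrite /tt big1 // => j _.
have -> : (sig j == k) = false by apply/negP => /eqP e; move: kS; rewrite -e sigS.
by rewrite mul0r.
Qed.

Local Notation phi := (mmap (@mpolyC m F) tt).

Lemma phiX k : phi 'X_k = tt k.
Proof. by rewrite mmapX mmap1U. Qed.

Lemma phiC c : phi c%:MP = c%:MP.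
Proof. by rewrite mmapC. Qed.

Lemma phiM p q : phi (p * q) = phi p * phi q.
Proof. by rewrite rmorphM. Qed.

Lemma ev_tt k : meval (fun _ : 'I_m => 0 : F) (tt k) = 0.
Proof.
rewrite /tt rmorph_sum big1 // => j _.
by rewrite rmorphM /= mevalXU mulr0.
Qed.

Lemma ev_phi p : meval (fun _ : 'I_m => 0 : F) (phi p) = meval (fun _ : 'I_n => 0 : F) p.
Proof.
elim/mpolyind: p => [|c mm p _ _ IH]; first by rewrite !rmorph0.
rewrite !rmorphD /= IH; congr (_ + _).
rewrite mmapZ mmapX rmorphM /= mevalC mevalZ mevalX /mmap1 rmorph_prod /=.
congr (_ * _); apply: eq_bigr => i _.
by rewrite rmorphXn /= ev_tt.
Qed.

Lemma mderiv_nat (k : nat) (i : 'I_m) : (k%:R : {mpoly F[m]})^`M(i) = 0.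
Proof.
have -> : (k%:R : {mpoly F[m]}) = (k%:R : F)%:MP by rewrite rmorph_nat.
exact: mderivC.
Qed.

Lemma phi_deriv k' p : (phi p)^`M(k') = phi (p^`M(sig k')).
Proof.
pose Q p := (phi p)^`M(k') = phi (p^`M(sig k')).
have QD : forall p q, Q p -> Q q -> Q (p + q).
  by move=> p1 q1; rewrite /Q => h1 h2; rewrite !mderivD !rmorphD /= !mderivD h1 h2.
have QM : forall p q, Q p -> Q q -> Q (p * q).
  move=> p1 q1; rewrite /Q => h1 h2.
  by rewrite !mderivM !rmorphD !rmorphM /= !mderivM h1 h2.
have QC : forall c, Q c%:MP.
  by move=> c; rewrite /Q mmapC !mderivC rmorph0.
have Q1 : Q 1 by rewrite -mpolyC1; apply: QC.
have QX : forall l, Q 'X_l.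
  move=> l; rewrite /Q phiX mderivXU rmorph_nat /tt raddf_sum /=.
  rewrite (eq_bigr (fun k'' => ((sig k'' == l) * (k' == k''))%:R)); last first.
    by move=> k'' _; rewrite mderivM mderiv_nat mul0r add0r mderivXU natrM.
  rewrite (bigD1 k') //= eqxx muln1 big1 ?addr0 // => j ne.
  have -> : (k' == j) = false by rewrite eq_sym (negbTE ne).
  by rewrite muln0.
have QXn : forall l e, Q ('X_l ^+ e).
  by move=> l; elim=> [|e IH]; [rewrite expr0 | rewrite exprS; apply: QM].
have QXm : forall mm, Q 'X_[mm].
  move=> mm; rewrite mpolyXE_id; apply: (big_ind Q) => //.
elim/mpolyind: p => [|c mm p _ _ IH]; first by rewrite /Q !(rmorph0, mderiv0).
by apply: QD => //; rewrite -mul_mpolyC; apply: QM.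
Qed.

Variable A : 'M[F]_n.

Lemma inducedE i j : induced A S' i j = A (sig i) (sig j).
Proof. by rewrite mxE. Qed.

Lemma phi_Br p1 p2 q :
  phi (Br A p1 p2 q) = Br (induced A S') (phi p1) (phi p2) (phi q).
Proof.
rewrite /Br rmorph_sum /= (reidx) => [|k kS]; last first.
  rewrite rmorph_sum big1 // => l _.
  by rewrite !rmorphM /= phiX tt_out // mulr0 !mul0r.
apply: eq_bigr => k' _; rewrite rmorph_sum /= (reidx) => [|l lS]; last first.
  by rewrite !rmorphM /= (phiX l) tt_out // mulr0 !mul0r.
apply: eq_bigr => l' _.
by rewrite !rmorphM !rmorphB !rmorphM /= phiC !phiX !tt_sig !phi_deriv inducedE.
Qed.

Definition zz : 'cV[{mpoly F[m]}]_m :=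
  \col_k' phi ((\adj (Mp A) *m @xp F n) (sig k') 0).

Lemma sys : Mp (induced A S') *m zz = phi (\det (Mp A)) *: @xp F m.
Proof.
have H : Mp A *m (\adj (Mp A) *m @xp F n) = \det (Mp A) *: @xp F n.
  by rewrite mulmxA mul_mx_adj mul_scalar_mx.
rewrite /zz; move: H.
set P := \adj (Mp A) *m @xp F n; set D := \det (Mp A) => H.
pose s i := \sum_(j < n) (A i j)%:MP * tt j.
have row : forall i, \sum_k phi (Mp A i k) * phi (P k 0) = phi D * tt i.
  move=> i; have := congr1 (fun M : 'M[{mpoly F[n]}]_(n,1) => phi (M i 0)) H.
  rewrite /= !mxE rmorph_sum rmorphM /= phiX => <-.
  by apply: eq_bigr => k _; rewrite rmorphM; reflexivity.
have phiMp : forall i k,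
    phi (Mp A i k) = (i == k)%:R * (1 - s i) - tt i * (A i k)%:MP.
  move=> i k; rewrite mxE rmorphB !rmorphM rmorph_nat rmorphB rmorph1 rmorph_sum /=.
  rewrite phiX phiC; congr (_ * (_ - _) - _).
  by apply: eq_bigr => j _; rewrite rmorphM /= phiC phiX.
have s_ne : forall i, 1 - s i != 0.
  move=> i; apply/negP => /eqP h.
  have := congr1 (meval (fun _ : 'I_m => 0 : F)) h.
  rewrite rmorphB rmorph1 rmorph_sum big1 ?subr0 ?rmorph0.
    by move/eqP; rewrite oner_eq0.
  by move=> j _; rewrite rmorphM /= ev_tt mulr0.
have Pout : forall k, k \notin S' -> phi (P k 0) = 0.
  move=> k kS; have := row k; rewrite tt_out // mulr0 (bigD1 k) //= big1 ?addr0.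
    rewrite phiMp eqxx tt_out // mul0r subr0 mul1r => /eqP.
    by rewrite mulf_eq0 (negbTE (s_ne k)) /= => /eqP.
  move=> l ne; rewrite phiMp tt_out // mul0r subr0.
  by rewrite eq_sym (negbTE ne) /= mulr0n !mul0r.
have sE : forall i', s (sig i') = \sum_(j' < m) (induced A S' i' j')%:MP * 'X_j'.
  move=> i'; rewrite /s (reidx) => [|j jS]; last by rewrite tt_out // mulr0.
  by apply: eq_bigr => j' _; rewrite tt_sig inducedE.
apply/matrixP => i' c; rewrite ord1 !mxE.
have := row (sig i'); rewrite tt_sig (reidx) => [<-|k kS]; last by rewrite Pout // mulr0.
apply: eq_bigr => k' _; rewrite phiMp sE tt_sig (inj_eq sig_inj) !mxE.
by [].
Qed.

Lemma phiD_ne0 : phi (\det (Mp A)) != 0.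
Proof.
apply/negP => /eqP h; have := ev_phi (\det (Mp A)).
by rewrite h rmorph0 ev0_det => /eqP; rewrite eq_sym oner_eq0.
Qed.

Lemma kahanB i' : kahan (induced A S') i' 0 =
  tofrac (phi ((\adj (Mp A) *m @xp F n) (sig i') 0)) / tofrac (phi (\det (Mp A))).
Proof.
have := sys; move/(congr1 (map_mx (@tofrac _))).
rewrite map_mxM map_mxZ -kahan_matrixE -xvecE => h.
have tD : tofrac (phi (\det (Mp A))) != 0 :> ratfun F m by rewrite tofrac_eq0 phiD_ne0.
rewrite /kahan.
have -> : @xvec F m = (tofrac (phi (\det (Mp A))))^-1 *:
    (kahan_matrix (induced A S') *m map_mx (@tofrac _) zz).
  by rewrite h scalerA mulVf // scale1r.
rewrite -scalemxAr mulKmx; last by rewrite kahan_matrixE Mp_unit.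
by rewrite !mxE mulrC.
Qed.

Lemma kp_restrict : kahan_poisson A -> kahan_poisson (induced A S').
Proof.
move=> KP i' j'.
have D0 := detMp_neq0 A.
have tD : tofrac (\det (Mp A)) != 0 :> ratfun F n by rewrite tofrac_eq0.
have hA := KP (sig i') (sig j'); rewrite !kahanE pbracket_frac // rmorphXn in hA.
have e : Br A ((\adj (Mp A) *m @xp F n) (sig i') 0) ((\adj (Mp A) *m @xp F n) (sig j') 0)
   (\det (Mp A)) = (A (sig i') (sig j'))%:MP * (\adj (Mp A) *m @xp F n) (sig i') 0 *
   (\adj (Mp A) *m @xp F n) (sig j') 0 * \det (Mp A) ^+ 2.
  apply/eqP; rewrite -tofrac_eq [tofrac (_ * _ ^+ 2)]rmorphM rmorphXn !rmorphM; apply/eqP; exact: aux2 tD hA.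
have e' := congr1 phi e; rewrite phi_Br rmorphM rmorphXn !rmorphM /= phiC in e'.
rewrite !kahanB pbracket_frac ?phiD_ne0 // e' [tofrac (_ * _ ^+ 2)]rmorphM !rmorphXn !rmorphM /= inducedE.
apply: aux3; by rewrite tofrac_eq0 phiD_ne0.
Qed.

End K.

Theorem main_generic (F : fieldType) (n : nat) (A : 'M[F]_n) :
  kahan_poisson A -> forall S' : {set 'I_n}, kahan_poisson (induced A S').
Proof. by move=> KP S'; apply: kp_restrict. Qed.

Local Close Scope quotient_scope.
Local Close Scope ring_scope.

Theorem proposition4p1 (b : bool) (n : nat) (A : 'M[FF b]_n) :
  skew_symmetric A -> kahan_poisson A ->
  forall S' : {set 'I_n}, (0 < #|S'|)%N -> kahan_poisson (induced A S').
Proof.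
move=> _ KP S' _; exact: main_generic.
Qed.
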